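(* Let $p>0$ and let $(u_n)_{n\ge0}$ be a sequence in $E^1$ which is $E_p$ summable to $\mu\in E^1$. If $\sqrt{n}\,D(u_{n-1},u_n)=O(1)$ as $n\to\infty$, then $(u_n)$ is bounded, i.e. there is $M>0$ with $D(u_n,\overline{0})<M$ for all $n$.
   Context: $E^1$ denotes the set of fuzzy numbers: functions $u:\mathbb{R}\to[0,1]$ that are normal, fuzzy convex, upper semicontinuous, and have compact support $\overline{\{t:u(t)>0\}}$. For $\alpha\in(0,1]$ the $\alpha$-level set is $[u]_\alpha=\{t:u(t)\ge\alpha\}$ and $[u]_0=\overline{\{t:u(t)>0\}}$; each is a compact interval $[u^-_\alpha,u^+_\alpha]$. Addition and scalar multiplication are defined levelwise: $[u+v]_\alpha=[u^-_\alpha+v^-_\alpha,u^+_\alpha+v^+_\alpha]$ and $[ku]_\alpha=k[u]_\alpha$ for $k\in\mathbb{R}$. The metric is $D(u,v)=\sup_{\alpha\in[0,1]}\max\{|u^-_\alpha-v^-_\alpha|,|u^+_\alpha-v^+_\alpha|\}$. $\overline{0}$ is the fuzzy number equal to $1$ at $0$ and $0$ elsewhere. For $p>0$ the Euler means are $t^{p}_n=\frac{1}{(p+1)^n}\sum_{k=0}^n\binom{n}{k}p^{n-k}u_k$, and $(u_n)$ is $E_p$ summable to $\mu$ if $D(t^p_n,\mu)\to0$. *)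

(* Defs.v *)
From Stdlib Require Import Reals Lra.
From Coquelicot Require Import Coquelicot.
Open Scope R_scope.

Definition is_fuzzy_number (u : R -> R) : Prop :=
  (forall t, 0 <= u t <= 1) /\
  (exists t, u t = 1) /\
  (forall x y l, 0 <= l <= 1 -> Rmin (u x) (u y) <= u (l * x + (1 - l) * y)) /\
  (forall t eps, 0 < eps ->
     exists delta, 0 < delta /\ forall s, Rabs (s - t) < delta -> u s < u t + eps) /\
  (* compact support: the closure of {t | u t > 0} is bounded (hence compact) *)
  (exists B, forall t, 0 < u t -> Rabs t <= B).

(** alpha-level set: [u]_a = {t | u t >= a} for a in (0,1],
    [u]_0 = closure of {t | u t > 0}. *)
Definition level_set (u : R -> R) (a : R) (t : R) : Prop :=
  if Rlt_dec 0 a then a <= u t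
  else forall eps, 0 < eps -> exists s, Rabs (s - t) < eps /\ 0 < u s.

Definition lo (u : R -> R) (a : R) : R := real (Glb_Rbar (level_set u a)).
Definition hi (u : R -> R) (a : R) : R := real (Lub_Rbar (level_set u a)).

Definition Dend (l1 h1 l2 h2 : R -> R) : R :=
  real (Lub_Rbar (fun d => exists a, 0 <= a <= 1 /\
          d = Rmax (Rabs (l1 a - l2 a)) (Rabs (h1 a - h2 a)))).

Definition Dfz (u v : R -> R) : R := Dend (lo u) (hi u) (lo v) (hi v).

Definition fz0 (t : R) : R := if Req_EM_T t 0 then 1 else 0.

(** Level-set endpoints of the Euler mean
    t^p_n = (p+1)^{-n} sum_{k=0}^n C(n,k) p^{n-k} u_k,
    computed levelwise (all coefficients are nonnegative, so
    [c u]_a = [c u^-_a, c u^+_a] and sums add endpoints). *)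
Definition euler_lo (p : R) (u : nat -> R -> R) (n : nat) (a : R) : R :=
  / (p + 1) ^ n * sum_f_R0 (fun k => Binomial.C n k * p ^ (n - k) * lo (u k) a) n.
Definition euler_hi (p : R) (u : nat -> R -> R) (n : nat) (a : R) : R :=
  / (p + 1) ^ n * sum_f_R0 (fun k => Binomial.C n k * p ^ (n - k) * hi (u k) a) n.

Definition D_euler (p : R) (u : nat -> R -> R) (n : nat) (mu : R -> R) : R :=
  Dend (euler_lo p u n) (euler_hi p u n) (lo mu) (hi mu).

Definition Ep_summable (p : R) (u : nat -> R -> R) (mu : R -> R) : Prop :=
  is_lim_seq (fun n => D_euler p u n mu) 0.

(* Main.v *)
Require Import Defs.
From Stdlib Require Import Reals Lra Lia.
From Coquelicot Require Import Coquelicot.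
Open Scope R_scope.


Definition T (p : R) (m : nat) (f : nat -> R) : R :=
  sum_f_R0 (fun k => Binomial.C m k * p ^ (m - k) * f k) m.

Lemma T_ext p m f g : (forall k, (k <= m)%nat -> f k = g k) -> T p m f = T p m g.
Proof. intros H; unfold T; apply sum_eq; intros i Hi; rewrite H; auto. Qed.

Lemma sum_lin (f g : nat -> R) a b n :
  sum_f_R0 (fun k => a * f k + b * g k) n = a * sum_f_R0 f n + b * sum_f_R0 g n.
Proof. induction n; simpl; [ring | rewrite IHn; ring]. Qed.

Lemma T_lin p m f g a b : T p m (fun k => a * f k + b * g k) = a * T p m f + b * T p m g.
Proof.
  unfold T. rewrite <- sum_lin. apply sum_eq; intros; ring.
Qed.

Lemma C_nonneg m k : 0 <= Binomial.C m k.
Proof.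
  unfold Binomial.C. apply Rmult_le_pos; [apply pos_INR|].
  left; apply Rinv_0_lt_compat; apply Rmult_lt_0_compat; apply lt_0_INR; apply Factorial.lt_O_fact.
Qed.

Lemma sum_S f n : sum_f_R0 f (S n) = sum_f_R0 f n + f (S n).
Proof. reflexivity. Qed.

Lemma T_shift p m f : T p (S m) f = T p m (fun k => f (S k)) + p * T p m f.
Proof.
  destruct m as [|m'].
  - unfold T; simpl. rewrite !C_n_0. replace (Binomial.C 1 1) with 1 by (symmetry; apply C_n_n). ring.
  - unfold T.
    rewrite (decomp_sum _ (S (S m'))) by lia. simpl pred.
    rewrite sum_S.
    rewrite (decomp_sum (fun k => Binomial.C (S m') k * p ^ (S m' - k) * f k) (S m')) by lia.
    simpl pred.
    rewrite (sum_S (fun k => Binomial.C (S m') k * p ^ (S m' - k) * f (S k))).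
    assert (E : sum_f_R0 (fun i => Binomial.C (S (S m')) (S i) * p ^ (S (S m') - S i) * f (S i)) m' =
      sum_f_R0 (fun k => Binomial.C (S m') k * p ^ (S m' - k) * f (S k)) m' +
      p * sum_f_R0 (fun i => Binomial.C (S m') (S i) * p ^ (S m' - S i) * f (S i)) m').
    { rewrite <- (Rmult_1_l (sum_f_R0 (fun k => Binomial.C (S m') k * p ^ (S m' - k) * f (S k)) m')).
      rewrite <- sum_lin. apply sum_eq. intros i Hi.
      rewrite <- pascal by lia.
      replace (S (S m') - S i)%nat with (S m' - i)%nat by lia.
      replace (S m' - i)%nat with (S (S m' - S i)) by lia. simpl. ring. }
    rewrite E. rewrite !C_n_0, !C_n_n.
    replace (S (S m') - S (S m'))%nat with 0%nat by lia.
    replace (S m' - S m')%nat with 0%nat by lia.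
    replace (S (S m') - 0)%nat with (S (S m')) by lia.
    replace (S m' - 0)%nat with (S m') by lia.
    simpl. ring.
Qed.

Lemma T_const p m c : T p m (fun _ => c) = c * (p + 1) ^ m.
Proof.
  induction m.
  - unfold T; simpl. rewrite C_n_0. ring.
  - rewrite T_shift, IHm. simpl. ring.
Qed.

Lemma T_sq p m : forall a, T p m (fun k => (a - INR k) ^ 2) * (p + 1) ^ 2 =
  ((a * (p + 1) - INR m) ^ 2 + INR m * p) * (p + 1) ^ m.
Proof.
  induction m; intros a.
  - unfold T; simpl. rewrite C_n_0. ring.
  - rewrite T_shift.
    rewrite (T_ext p m (fun k => (a - INR (S k)) ^ 2) (fun k => (a - 1 - INR k) ^ 2))
      by (intros; rewrite S_INR; ring).
    rewrite Rmult_plus_distr_r, Rmult_assoc, (IHm a), (IHm (a - 1)), S_INR. simpl. ring.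
Qed.

Lemma T_abs_le p m g h : 0 <= p -> (forall k, (k <= m)%nat -> Rabs (g k) <= h k) ->
  Rabs (T p m g) <= T p m h.
Proof.
  intros Hp H. unfold T.
  eapply Rle_trans; [apply sum_f_R0_triangle|].
  apply sum_Rle. intros k Hk.
  rewrite !Rabs_mult. rewrite (Rabs_right (Binomial.C m k)) by (apply Rle_ge, C_nonneg).
  rewrite (Rabs_right (p ^ _)) by (apply Rle_ge, pow_le; auto).
  apply Rmult_le_compat_l; [apply Rmult_le_pos; [apply C_nonneg | apply pow_le; auto]|].
  auto.
Qed.

Lemma sqrt_step K j : 0 <= K -> K / sqrt (INR (S j)) <= 2 * K * (sqrt (INR (S j)) - sqrt (INR j)).
Proof.
  intros HK. set (a := sqrt (INR (S j))). set (b := sqrt (INR j)).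
  assert (Ha2 : a * a = INR j + 1) by (unfold a; rewrite sqrt_sqrt; [rewrite S_INR; ring | apply pos_INR]).
  assert (Hb2 : b * b = INR j) by (unfold b; rewrite sqrt_sqrt; [ring | apply pos_INR]).
  assert (Ha : 0 < a) by (unfold a; apply sqrt_lt_R0; apply lt_0_INR; lia).
  assert (Hb : 0 <= b) by (unfold b; apply sqrt_pos).
  assert (Hab : b <= a) by nra.
  assert (H1 : 1 <= 2 * a * (a - b)) by nra.
  unfold Rdiv. apply (Rmult_le_reg_l a); auto.
  replace (a * (K * / a)) with K by (field; lra). nra.
Qed.

Lemma sqrt_amgm K n k : 0 <= K -> (1 <= n)%nat ->
  2 * K * Rabs (sqrt (INR n) - sqrt (INR k)) <= K + K * (INR n - INR k) ^ 2 / INR n.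
Proof.
  intros HK Hn. set (s := sqrt (INR n)). set (t := sqrt (INR k)).
  assert (Hs2 : s * s = INR n) by (unfold s; rewrite sqrt_sqrt; [ring | apply pos_INR]).
  assert (Ht2 : t * t = INR k) by (unfold t; rewrite sqrt_sqrt; [ring | apply pos_INR]).
  assert (Hs : 0 < s) by (unfold s; apply sqrt_lt_R0; apply lt_0_INR; lia).
  assert (Ht : 0 <= t) by (unfold t; apply sqrt_pos).
  rewrite <- Hs2, <- Ht2.
  replace (K * (s * s - t * t) ^ 2 / (s * s)) with (K * ((s - t) ^ 2 * ((s + t) / s) ^ 2)) by (field; lra).
  assert (Q : 1 <= ((s + t) / s) ^ 2).
  { assert (1 <= (s + t) / s). { apply (Rmult_le_reg_l s); auto. field_simplify; lra. } nra. }
  assert (H2 : 2 * Rabs (s - t) <= 1 + (s - t) ^ 2).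
  { destruct (Rcase_abs (s - t)); [rewrite Rabs_left by auto | rewrite Rabs_right by auto]; pose proof (pow2_ge_0 (s - t + 1)); pose proof (pow2_ge_0 (s - t - 1)); nra. }
  pose proof (pow2_ge_0 (s - t)) as P.
  assert (K * (s - t) ^ 2 <= K * ((s - t) ^ 2 * ((s + t) / s) ^ 2)).
  { apply Rmult_le_compat_l; auto. rewrite <- (Rmult_1_r ((s-t)^2)) at 1. apply Rmult_le_compat_l; auto. }
  assert (K * (2 * Rabs (s - t)) <= K * (1 + (s - t) ^ 2)) by (apply Rmult_le_compat_l; auto).
  lra.
Qed.

Lemma telescope K N (x : nat -> R) : 0 <= K ->
  (forall k, (N <= k)%nat -> Rabs (x k - x (S k)) <= K / sqrt (INR (S k))) ->
  forall k d, (N <= k)%nat -> Rabs (x (k + d)%nat - x k) <= 2 * K * (sqrt (INR (k + d)) - sqrt (INR k)).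
Proof.
  intros HK H k d Hk. induction d.
  - rewrite Nat.add_0_r. unfold Rminus. rewrite !Rplus_opp_r, Rabs_R0. lra.
  - replace (k + S d)%nat with (S (k + d)) by lia.
    replace (x (S (k + d)) - x k) with ((x (S (k + d)) - x (k + d)%nat) + (x (k + d)%nat - x k)) by ring.
    eapply Rle_trans; [apply Rabs_triang|].
    rewrite Rabs_minus_sym.
    pose proof (H (k + d)%nat ltac:(lia)).
    pose proof (sqrt_step K (k + d) HK). lra.
Qed.

Lemma diff_bound K N (x : nat -> R) : 0 <= K ->
  (forall k, (N <= k)%nat -> Rabs (x k - x (S k)) <= K / sqrt (INR (S k))) ->
  forall n k, (N <= k)%nat -> (N <= n)%nat ->
  Rabs (x n - x k) <= 2 * K * Rabs (sqrt (INR n) - sqrt (INR k)).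
Proof.
  intros HK H n k Hk Hn. destruct (Nat.le_ge_cases k n) as [L|L].
  - pose proof (telescope K N x HK H k (n - k) Hk) as H0.
    replace (k + (n - k))%nat with n in H0 by lia.
    assert (sqrt (INR k) <= sqrt (INR n)) by (apply sqrt_le_1_alt; apply le_INR; lia).
    rewrite (Rabs_right (sqrt _ - _)) by lra. auto.
  - pose proof (telescope K N x HK H n (k - n) Hn) as H0.
    replace (n + (k - n))%nat with k in H0 by lia.
    assert (sqrt (INR n) <= sqrt (INR k)) by (apply sqrt_le_1_alt; apply le_INR; lia).
    rewrite Rabs_minus_sym, (Rabs_minus_sym (sqrt _)).
    rewrite (Rabs_right (sqrt _ - _)) by lra. auto.
Qed.

Lemma core p K A Cb N N1 (x : nat -> R) :
  0 < p -> 0 <= K -> 0 <= A ->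
  (forall k, (k <= N)%nat -> Rabs (x k) <= A) ->
  (forall k, (N <= k)%nat -> Rabs (x k - x (S k)) <= K / sqrt (INR (S k))) ->
  (forall m, (N1 <= m)%nat -> Rabs (/ (p + 1) ^ m * T p m x) <= Cb) ->
  forall n, (N <= n)%nat -> (N1 <= n)%nat -> (1 <= n)%nat ->
  Rabs (x n) <= Cb + 2 * A + 3 * K.
Proof.
  intros Hp HK HA HxN Hstep HE n Hn Hn1 Hn0.
  set (r := p + 1).
  assert (Hr : 1 < r) by (unfold r; lra).
  assert (Hnpos : 1 <= INR n) by (apply (le_INR 1); auto).
  destruct (nfloor_ex (INR n * r) ltac:(nra)) as [j [Hj1 Hj2]].
  set (m := S j).
  assert (Hm : INR m = INR j + 1) by (unfold m; apply S_INR).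
  assert (Hnm : (N1 <= m)%nat).
  { assert (INR n < INR m) as HH by nra. apply INR_lt in HH. lia. }
  set (h := fun k : nat => (2 * A + K) * 1 + (K / INR n) * (INR n - INR k) ^ 2).
  assert (Hh : forall k, (k <= m)%nat -> Rabs (x n - x k) <= h k).
  { intros k _. unfold h.
    assert (Ek : K * (INR n - INR k) ^ 2 / INR n = K / INR n * (INR n - INR k) ^ 2) by (field; lra).
    destruct (Nat.le_gt_cases N k) as [Hk|Hk].
    - pose proof (diff_bound K N x HK Hstep n k Hk Hn).
      pose proof (sqrt_amgm K n k HK Hn0). lra.
    - pose proof (diff_bound K N x HK Hstep n N (Nat.le_refl N) Hn).
      pose proof (sqrt_amgm K n N HK Hn0).
      pose proof (HxN N (Nat.le_refl N)). pose proof (HxN k ltac:(lia)).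
      assert (INR k < INR N) by (apply lt_INR; lia).
      assert (INR N <= INR n) by (apply le_INR; lia).
      assert ((INR n - INR N) ^ 2 <= (INR n - INR k) ^ 2) by nra.
      assert (K * (INR n - INR N) ^ 2 / INR n <= K * (INR n - INR k) ^ 2 / INR n).
      { unfold Rdiv. apply Rmult_le_compat_r; [left; apply Rinv_0_lt_compat; lra|].
        apply Rmult_le_compat_l; auto. }
      replace (x n - x k) with ((x n - x N) + x N - x k) by ring.
      pose proof (Rabs_triang (x n - x N + x N) (- x k)).
      pose proof (Rabs_triang (x n - x N) (x N)). rewrite Rabs_Ropp in *.
      unfold Rminus at 1. lra. }
  assert (HT := T_abs_le p m (fun k => x n - x k) h ltac:(lra) Hh).
  rewrite (T_ext p m (fun k => x n - x k) (fun k => x n * 1 + (-1) * x k)) in HT by (intros; ring).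
  rewrite T_lin in HT. unfold h in HT. rewrite T_lin in HT.
  rewrite !T_const in HT.
  pose proof (T_sq p m (INR n)) as HQ. fold r in HQ, HT.
  set (Q := T p m (fun k => (INR n - INR k) ^ 2)) in *.
  assert (Hrm : 0 < r ^ m) by (apply pow_lt; lra).
  assert (HQb : Q <= (INR n + 1) * r ^ m).
  { assert (Q * r ^ 2 <= (INR n + 1) * r ^ m * r ^ 2).
    { rewrite HQ. replace ((INR n + 1) * r ^ m * r ^ 2) with ((INR n + 1) * r ^ 2 * r ^ m) by ring.
      apply Rmult_le_compat_r; [lra|].
      assert ((INR n * r - INR m) ^ 2 <= 1) by nra.
      assert (INR m * p <= (INR n * r + 1) * p) by nra.
      unfold r in *. nra. }
    apply (Rmult_le_reg_r (r ^ 2)); [nra | auto]. }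
  assert (HQ0 : 0 <= Q).
  { pose proof (T_abs_le p m (fun _ => 0) (fun k => (INR n - INR k) ^ 2) ltac:(lra)) as HH.
    rewrite T_const, Rmult_0_l, Rabs_R0 in HH. apply HH; [idtac].
    intros k _; apply pow2_ge_0. }
  set (E := / r ^ m * T p m x).
  assert (HD : Rabs (x n - E) <= 2 * A + 3 * K).
  { replace (x n - E) with (/ r ^ m * (x n * (1 * r ^ m) + -1 * T p m x)) by (unfold E; field; lra).
    rewrite Rabs_mult, Rabs_right by (apply Rle_ge; left; apply Rinv_0_lt_compat; auto).
    apply (Rmult_le_reg_l (r ^ m)); auto.
    rewrite <- Rmult_assoc, Rinv_r, Rmult_1_l by lra.
    eapply Rle_trans; [exact HT|].
    assert (K / INR n * Q <= K / INR n * ((INR n + 1) * r ^ m)).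
    { apply Rmult_le_compat_l; auto. unfold Rdiv; apply Rmult_le_pos; auto; left; apply Rinv_0_lt_compat; lra. }
    assert (K / INR n * ((INR n + 1) * r ^ m) <= 2 * K * r ^ m).
    { replace (K / INR n * ((INR n + 1) * r ^ m)) with (K * r ^ m * ((INR n + 1) / INR n)) by (field; lra).
      replace (2 * K * r ^ m) with (K * r ^ m * 2) by ring.
      apply Rmult_le_compat_l; [nra|].
      apply (Rmult_le_reg_r (INR n)); [lra|]. field_simplify; lra. }
    nra. }
  pose proof (HE m Hnm) as HEm. fold r E in HEm.
  replace (x n) with ((x n - E) + E) by ring.
  pose proof (Rabs_triang (x n - E) E). lra.
Qed.

Lemma glb_bound (E : R -> Prop) B : (exists t, E t) -> (forall t, E t -> Rabs t <= B) ->
  Rabs (real (Glb_Rbar E)) <= B.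
Proof.
  intros [t Et] HB. destruct (Glb_Rbar_correct E) as [H1 H2].
  assert (Hl : is_lb_Rbar E (-B)).
  { intros y Ey. simpl. pose proof (HB y Ey). apply Rabs_le_between in H. lra. }
  specialize (H2 _ Hl). specialize (H1 t Et). pose proof (HB t Et).
  apply Rabs_le_between in H. revert H1 H2. destruct (Glb_Rbar E) as [g| |]; simpl; intros; try contradiction.
  apply Rabs_le_between. lra.
Qed.

Lemma lub_bound (E : R -> Prop) B : (exists t, E t) -> (forall t, E t -> Rabs t <= B) ->
  Rabs (real (Lub_Rbar E)) <= B.
Proof.
  intros [t Et] HB. destruct (Lub_Rbar_correct E) as [H1 H2].
  assert (Hl : is_ub_Rbar E B).
  { intros y Ey. simpl. pose proof (HB y Ey). apply Rabs_le_between in H. lra. }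
  specialize (H2 _ Hl). specialize (H1 t Et). pose proof (HB t Et).
  apply Rabs_le_between in H. revert H1 H2. destruct (Lub_Rbar E) as [g| |]; simpl; intros; try contradiction.
  apply Rabs_le_between. lra.
Qed.

Lemma lub_ge (S : R -> Prop) d Bd : (forall d, S d -> d <= Bd) -> S d -> d <= real (Lub_Rbar S).
Proof.
  intros HB Sd. destruct (Lub_Rbar_correct S) as [H1 H2].
  assert (Hl : is_ub_Rbar S Bd) by (intros y Sy; simpl; auto).
  specialize (H2 _ Hl). specialize (H1 d Sd).
  revert H1 H2. destruct (Lub_Rbar S) as [g| |]; simpl; intros; try contradiction. auto.
Qed.

Lemma lub_le (S : R -> Prop) M : (forall d, S d -> d <= M) -> 0 <= M -> real (Lub_Rbar S) <= M.
Proof.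
  intros HB HM. destruct (Lub_Rbar_correct S) as [H1 H2].
  assert (Hl : is_ub_Rbar S M) by (intros y Sy; simpl; auto).
  specialize (H2 _ Hl).
  revert H1 H2. destruct (Lub_Rbar S) as [g| |]; simpl; intros; try contradiction; auto.
Qed.

Lemma level_bounds (u : R -> R) B : (exists t, u t = 1) -> (forall t, 0 < u t -> Rabs t <= B) ->
  forall a, 0 <= a <= 1 -> Rabs (lo u a) <= B /\ Rabs (hi u a) <= B.
Proof.
  intros [t0 Ht0] HB a Ha.
  assert (Ne : exists t, level_set u a t).
  { exists t0. unfold level_set. destruct (Rlt_dec 0 a). lra.
    intros eps Heps. exists t0. rewrite Rminus_diag, Rabs_R0. lra. }
  assert (Bd : forall t, level_set u a t -> Rabs t <= B).
  { intros t. unfold level_set. destruct (Rlt_dec 0 a) as [Hpos|Hpos].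
    - intros Hle. apply HB. lra.
    - intros H. destruct (Rle_dec (Rabs t) B) as [|Hn]; auto.
      destruct (H (Rabs t - B)) as [s [Hs1 Hs2]]; [lra|].
      pose proof (HB s Hs2).
      pose proof (Rabs_triang (t - s) s). replace (t - s + s) with t in H1 by ring.
      rewrite Rabs_minus_sym in Hs1. lra. }
  split; [apply glb_bound | apply lub_bound]; auto.
Qed.

Lemma fuzzy_bound u : is_fuzzy_number u -> exists B, 0 <= B /\
  forall a, 0 <= a <= 1 -> Rabs (lo u a) <= B /\ Rabs (hi u a) <= B.
Proof.
  intros [_ [[t0 Ht0] [_ [_ [B HB]]]]].
  exists B. split.
  - eapply Rle_trans; [apply Rabs_pos| apply (HB t0)]. lra.
  - apply level_bounds; eauto.
Qed.

Lemma fz0_lohi a : 0 <= a <= 1 -> lo fz0 a = 0 /\ hi fz0 a = 0.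
Proof.
  intros Ha. destruct (level_bounds fz0 0) with (a := a) as [H1 H2]; auto.
  - exists 0. unfold fz0. destruct (Req_EM_T 0 0); [auto| congruence].
  - intros t. unfold fz0. destruct (Req_EM_T t 0) as [->|]; intros; [rewrite Rabs_R0; lra | lra].
  - split; apply Rabs_le_between in H1; apply Rabs_le_between in H2; lra.
Qed.

Lemma Dend_ge l1 h1 l2 h2 B :
  (forall a, 0 <= a <= 1 -> Rabs (l1 a - l2 a) <= B /\ Rabs (h1 a - h2 a) <= B) ->
  forall a, 0 <= a <= 1 -> Rabs (l1 a - l2 a) <= Dend l1 h1 l2 h2 /\ Rabs (h1 a - h2 a) <= Dend l1 h1 l2 h2.
Proof.
  intros HB a Ha. unfold Dend.
  assert (Hs : forall d, (exists a, 0 <= a <= 1 /\ d = Rmax (Rabs (l1 a - l2 a)) (Rabs (h1 a - h2 a))) -> d <= B).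
  { intros d [b [Hb ->]]. destruct (HB b Hb). apply Rmax_lub; auto. }
  pose proof (lub_ge _ (Rmax (Rabs (l1 a - l2 a)) (Rabs (h1 a - h2 a))) B Hs (ex_intro _ a (conj Ha eq_refl))).
  split; eapply Rle_trans; [apply Rmax_l | eauto | apply Rmax_r | eauto].
Qed.

Lemma Dend_le l1 h1 l2 h2 M :
  (forall a, 0 <= a <= 1 -> Rabs (l1 a - l2 a) <= M /\ Rabs (h1 a - h2 a) <= M) -> 0 <= M ->
  Dend l1 h1 l2 h2 <= M.
Proof.
  intros HB HM. unfold Dend. apply lub_le; auto.
  intros d [b [Hb ->]]. destruct (HB b Hb). apply Rmax_lub; auto.
Qed.

Lemma fin_bound (u : nat -> R -> R) : (forall n, is_fuzzy_number (u n)) ->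
  forall m, exists B, 0 <= B /\ forall k, (k <= m)%nat -> forall a, 0 <= a <= 1 ->
  Rabs (lo (u k) a) <= B /\ Rabs (hi (u k) a) <= B.
Proof.
  intros Hu m. induction m as [|m [B [HB0 HB]]].
  - destruct (fuzzy_bound _ (Hu 0%nat)) as [B [HB0 HB]]. exists B; split; auto.
    intros k Hk. replace k with 0%nat by lia. auto.
  - destruct (fuzzy_bound _ (Hu (S m))) as [B' [HB0' HB']]. exists (B + B'); split; [lra|].
    intros k Hk a Ha. destruct (Nat.eq_dec k (S m)) as [->|Hne].
    + destruct (HB' a Ha); lra.
    + destruct (HB k ltac:(lia) a Ha); lra.
Qed.

Lemma T_bound p m f B : 0 < p -> (forall k, (k <= m)%nat -> Rabs (f k) <= B) ->
  Rabs (/ (p + 1) ^ m * T p m f) <= B.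
Proof.
  intros Hp H. pose proof (T_abs_le p m f (fun _ => B) ltac:(lra) H) as HT.
  rewrite T_const in HT.
  assert (0 < (p + 1) ^ m) by (apply pow_lt; lra).
  rewrite Rabs_mult, Rabs_right by (apply Rle_ge; left; apply Rinv_0_lt_compat; auto).
  apply (Rmult_le_reg_l ((p + 1) ^ m)); auto.
  rewrite <- Rmult_assoc, Rinv_r, Rmult_1_l by lra. lra.
Qed.

Theorem mainTheorem3 (p : R) (u : nat -> R -> R) (mu : R -> R) :
  0 < p ->
  (forall n, is_fuzzy_number (u n)) ->
  is_fuzzy_number mu ->
  Ep_summable p u mu ->
  (exists K N, forall n : nat, (N <= n)%nat ->
     sqrt (INR (S n)) * Dfz (u n) (u (S n)) <= K) ->
  exists M, 0 < M /\ forall n, Dfz (u n) fz0 < M.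
Proof.
  intros Hp Hu Hmu HEp [K [N HK]].
  assert (Hcons : forall k a, 0 <= a <= 1 ->
    Rabs (lo (u k) a - lo (u (S k)) a) <= Dfz (u k) (u (S k)) /\
    Rabs (hi (u k) a - hi (u (S k)) a) <= Dfz (u k) (u (S k))).
  { intros k a Ha. destruct (fin_bound u Hu (S k)) as [B [HB0 HB]].
    unfold Dfz. apply (Dend_ge _ _ _ _ (B + B)); auto.
    intros b Hb. destruct (HB k ltac:(lia) b Hb), (HB (S k) ltac:(lia) b Hb).
    split; eapply Rle_trans; try apply Rabs_triang; rewrite Rabs_Ropp; lra. }
  assert (HK0 : 0 <= K).
  { pose proof (HK N (Nat.le_refl N)).
    destruct (Hcons N 0 ltac:(lra)) as [H1 _].
    pose proof (Rabs_pos (lo (u N) 0 - lo (u (S N)) 0)).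
    pose proof (sqrt_pos (INR (S N))). nra. }
  assert (Hstep : forall k, (N <= k)%nat -> Dfz (u k) (u (S k)) <= K / sqrt (INR (S k))).
  { intros k Hk. pose proof (HK k Hk).
    assert (0 < sqrt (INR (S k))) by (apply sqrt_lt_R0; apply lt_0_INR; lia).
    apply (Rmult_le_reg_l (sqrt (INR (S k)))); auto.
    replace (sqrt (INR (S k)) * (K / sqrt (INR (S k)))) with K by (field; lra). auto. }
  apply is_lim_seq_spec in HEp.
  destruct (HEp (mkposreal 1 Rlt_0_1)) as [N1 HN1]. simpl in HN1.
  destruct (fuzzy_bound mu Hmu) as [Bmu [HBmu0 HBmu]].
  assert (Heul : forall m, (N1 <= m)%nat -> forall a, 0 <= a <= 1 ->
     Rabs (/ (p + 1) ^ m * T p m (fun k => lo (u k) a)) <= 1 + Bmu /\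
     Rabs (/ (p + 1) ^ m * T p m (fun k => hi (u k) a)) <= 1 + Bmu).
  { intros m Hm a Ha. destruct (fin_bound u Hu m) as [Bm [HBm0 HBm]].
    pose proof (HN1 m Hm) as HD. rewrite Rminus_0_r in HD.
    assert (HDe := Dend_ge (euler_lo p u m) (euler_hi p u m) (lo mu) (hi mu) (Bm + Bmu)).
    destruct HDe with (a := a) as [E1 E2]; auto.
    - intros b Hb. destruct (HBmu b Hb).
      assert (Rabs (euler_lo p u m b) <= Bm) by (apply T_bound; auto; intros k Hk; apply (HBm k Hk b Hb)).
      assert (Rabs (euler_hi p u m b) <= Bm) by (apply T_bound; auto; intros k Hk; apply (HBm k Hk b Hb)).
      split; eapply Rle_trans; try apply Rabs_triang; rewrite Rabs_Ropp; lra.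
    - fold (D_euler p u m mu) in E1, E2.
      pose proof (Rle_abs (D_euler p u m mu)).
      destruct (HBmu a Ha).
      change (/ (p + 1) ^ m * T p m (fun k => lo (u k) a)) with (euler_lo p u m a).
      change (/ (p + 1) ^ m * T p m (fun k => hi (u k) a)) with (euler_hi p u m a).
      pose proof (Rabs_triang (euler_lo p u m a - lo mu a) (lo mu a)).
      pose proof (Rabs_triang (euler_hi p u m a - hi mu a) (hi mu a)).
      replace (euler_lo p u m a - lo mu a + lo mu a) with (euler_lo p u m a) in * by ring.
      replace (euler_hi p u m a - hi mu a + hi mu a) with (euler_hi p u m a) in * by ring.
      lra. }
  destruct (fin_bound u Hu N) as [A [HA0 HA]].
  set (N2 := (N + N1 + 1)%nat).
  destruct (fin_bound u Hu N2) as [B2 [HB20 HB2]].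
  set (M0 := 1 + Bmu + 2 * A + 3 * K + B2).
  exists (M0 + 1). split; [unfold M0; lra|].
  intros n.
  assert (Hn : forall a, 0 <= a <= 1 -> Rabs (lo (u n) a) <= M0 /\ Rabs (hi (u n) a) <= M0).
  { intros a Ha. destruct (Nat.le_gt_cases n N2) as [Hle|Hgt].
    - destruct (HB2 n Hle a Ha). unfold M0; split; lra.
    - split.
      + assert (Rabs (lo (u n) a) <= 1 + Bmu + 2 * A + 3 * K).
        { apply (core p K A (1 + Bmu) N N1 (fun k => lo (u k) a)); auto; try (unfold N2 in Hgt; lia).
          - intros k Hk. apply (HA k Hk a Ha).
          - intros k Hk. destruct (Hcons k a Ha). pose proof (Hstep k Hk). lra.
          - intros m Hm. apply (Heul m Hm a Ha). }
        unfold M0; lra.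
      + assert (Rabs (hi (u n) a) <= 1 + Bmu + 2 * A + 3 * K).
        { apply (core p K A (1 + Bmu) N N1 (fun k => hi (u k) a)); auto; try (unfold N2 in Hgt; lia).
          - intros k Hk. apply (HA k Hk a Ha).
          - intros k Hk. destruct (Hcons k a Ha). pose proof (Hstep k Hk). lra.
          - intros m Hm. apply (Heul m Hm a Ha). }
        unfold M0; lra. }
  assert (Dfz (u n) fz0 <= M0).
  { unfold Dfz. apply Dend_le; [|unfold M0; lra].
    intros a Ha. destruct (fz0_lohi a Ha) as [-> ->]. rewrite !Rminus_0_r. auto. }
  lra.
Qed.
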